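(* Assume $f$ has a unique global maximizer $g$ and the problem contains no weak epistasis. Then for every $v\in V$, $\mathcal C(\mathcal M_{SO}(v))=\mathcal{IN}^*(v)$; consequently the minimum stationary optimum of $v$ is unique and equals $\{(u,g[u]):u\in\mathcal{IN}^*(v)\}$.
   Context: Fix $\ell\ge1$, loci $V=\{0,\dots,\ell-1\}$, chromosomes $\vec y\in\{0,1\}^V$, fitness $f:\{0,1\}^V\to\mathbb R$ (maximized) with unique global maximizer $g$. An assignment $A$ is a set of pairs $(v,a)$ ($v\in V$, $a\in\{0,1\}$) with at most one pair per locus; $A[v]=a$ if $(v,a)\in A$, else $A[v]=*$; coverage $\mathcal C(A)=\{v:A[v]\ne*\}$. $\Psi_A$ (constrained optima) is the set of chromosomes agreeing with $A$ on $\mathcal C(A)$ with maximum fitness among such chromosomes; $\Psi_A[v]=\{\psi_v:\psi\in\Psi_A\}$. For full assignments $B$, $f(B)$ is the fitness of the corresponding chromosome. Epistasis: for $v\in V$ and nonempty $S\subseteq V\setminus\{v\}$, $S\Rightarrow v$ iff for every $s\in S$ there exists an assignment $A$ with $\mathcal C(A)=S$ and $\Psi_A[v]\neq\Psi_{A\setminus\{(s,A[s])\}}[v]$; the empty set is never epistatic. An epistasis $S\Rightarrow v$ with $|S|\ge2$ is weak if no nonempty proper subset $T\subsetneq S$ has $T\Rightarrow v$; ''no weak epistasis'' means no epistasis is weak. The epistatic graph (EG) is the directed graph on $V$ with an edge $u\to v$ iff $\{u\}\Rightarrow v$. $\mathcal{IN}^0(v)=\{v\}$, $\mathcal{IN}^i(v)=\{u:\exists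 w\in\mathcal{IN}^{i-1}(v),\ \{u\}\Rightarrow w\}$ for $i\ge1$, $\mathcal{IN}^*(v)=\bigcup_{i=0}^{\ell-1}\mathcal{IN}^i(v)$. A stationary optimum is a nonempty assignment $A$ such that for every assignment $A'\neq A$ with $\mathcal C(A')=\mathcal C(A)$ and every assignment $R$ with $\mathcal C(R)=V\setminus\mathcal C(A)$, $f(A\cup R)>f(A'\cup R)$. The minimum stationary optimum $\mathcal M_{SO}(v)$ of locus $v$ is a stationary optimum $A$ with $v\in\mathcal C(A)$ of minimum size. *)

(* Defs.v *)
From mathcomp Require Import all_boot all_order all_algebra.
Set Implicit Arguments. Unset Strict Implicit. Unset Printing Implicit Defensive.
Import Order.TTheory GRing.Theory Num.Theory.
Local Open Scope ring_scope.

Section Epi.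
Variable l : nat.
Variable R : realFieldType.

Definition chrom := {ffun 'I_l -> bool}.
(* an assignment: at most one value per locus; A v = None means A[v] = * *)
Definition assign := {ffun 'I_l -> option bool}.

Variable f : chrom -> R.

Definition coverage (A : assign) : {set 'I_l} := [set v | A v != None].

Definition agrees (A : assign) (y : chrom) : bool :=
  [forall v, (A v == None) || (A v == Some (y v))].

Definition Psi (A : assign) : {set chrom} :=
  [set y | agrees A y && [forall z, agrees A z ==> (f z <= f y)]].

Definition PsiAt (A : assign) (v : 'I_l) : {set bool} := [set (y : chrom) v | y in Psi A].

Definition remove (A : assign) (s : 'I_l) : assign :=
  [ffun u => if u == s then None else A u].

Definition epistatic (S : {set 'I_l}) (v : 'I_l) : bool :=
  [&& S != set0, v \notin S &
   [forall s in S, exists A : assign,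
       (coverage A == S) && (PsiAt A v != PsiAt (remove A s) v)]].

Definition weak_epistasis (S : {set 'I_l}) (v : 'I_l) : bool :=
  [&& epistatic S v, (2 <= #|S|)%N &
   [forall T : {set 'I_l}, (T != set0) && (T \proper S) ==> ~~ epistatic T v]].

Definition no_weak_epistasis : Prop :=
  forall S v, ~~ weak_epistasis S v.

Fixpoint IN (v : 'I_l) (i : nat) : {set 'I_l} :=
  match i with
  | 0 => [set v]
  | i'.+1 => [set u | [exists w in IN v i', epistatic [set u] w]]
  end.

Definition INstar (v : 'I_l) : {set 'I_l} := \bigcup_(i < l) IN v i.

(* the full assignment A \cup R, for C(R) = V \ C(A) *)
Definition combine (A Rr : assign) : chrom :=
  [ffun u => match A u with Some b => b | None => odflt false (Rr u) end].

Definition stationary_optimum (A : assign) : Prop :=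
  coverage A != set0 /\
  forall (A' Rr : assign), A' != A -> coverage A' = coverage A ->
    coverage Rr = ~: coverage A ->
    f (combine A' Rr) < f (combine A Rr).

Definition is_min_SO (v : 'I_l) (A : assign) : Prop :=
  [/\ stationary_optimum A, v \in coverage A &
      forall B, stationary_optimum B -> v \in coverage B ->
        (#|coverage A| <= #|coverage B|)%N ].

Definition restrict (g : chrom) (S : {set 'I_l}) : assign :=
  [ffun u => if u \in S then Some (g u) else None].

End Epi.

(* Main.v *)
Require Import Defs.
From mathcomp Require Import all_boot all_order all_algebra.
Import Order.TTheory GRing.Theory Num.Theory.
Local Open Scope ring_scope.

Section H.
Variable l : nat.
Variable R : realFieldType.
Variable f : chrom l -> R.
Variable g : chrom l.
Hypothesis gmax : forall y : chrom l, y != g -> f y < f g.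

Lemma Psi_nonempty (A : assign l) : exists y, y \in Psi f A.
Proof.
pose y0 : chrom l := [ffun u => odflt false (A u)].
have Py0 : agrees A y0.
  apply/forallP => u; rewrite ffunE; case: (A u) => [b|] //=.
have ord_refl : reflexive (fun x y : R => y <= x) by move=> x; exact: le_refl.
have ord_trans : transitive (fun x y : R => y <= x).
  by move=> x y z /= H1 H2; exact: le_trans H2 H1.
have ord_total : total (fun x y : R => y <= x) by move=> x y; exact: le_total.
case: (@extremumP _ _ _ y0 (agrees A) f ord_refl ord_trans ord_total Py0) => y Py Hy.
exists y; rewrite inE Py /=; apply/forallP => z; apply/implyP => Pz.
exact: Hy.
Qed.

Lemma cov0 (A : assign l) : coverage A = set0 -> forall u, A u = None.
Proof.
move=> H u; apply/eqP; apply: contraT => Hu.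
have : u \in coverage A by rewrite inE.
by rewrite H inE.
Qed.

Lemma Psi_empty (A : assign l) : coverage A = set0 -> Psi f A = [set g].
Proof.
move=> /cov0 H; have agT : forall y, agrees A y.
  by move=> y; apply/forallP => u; rewrite H.
apply/setP => y; rewrite !inE agT /=.
apply/forallP/eqP.
- move=> Hy; apply/eqP; apply: contraT => ny.
  have := Hy g; rewrite agT /= => Hle.
  by have := gmax _ ny; rewrite ltNge Hle.
- move=> -> z; rewrite agT /=; case: (eqVneq z g) => [->|nz] //.
  exact: ltW (gmax _ nz).
Qed.

Lemma PsiAt_empty (A : assign l) w : coverage A = set0 -> PsiAt f A w = [set g w].
Proof.
move=> H; rewrite /PsiAt Psi_empty //; exact: imset_set1.
Qed.

Lemma cov_remove (A : assign l) s : coverage (remove A s) = coverage A :\ s.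
Proof.
apply/setP => u; rewrite !inE ffunE; case: (eqVneq u s) => //=.
Qed.

Lemma cov_restrict (y : chrom l) S : coverage (restrict y S) = S.
Proof. by apply/setP => u; rewrite !inE ffunE; case: (u \in S). Qed.

Lemma combine_restrict (y : chrom l) S :
  combine (restrict y S) (restrict y (~: S)) = y.
Proof.
apply/ffunP => u; rewrite !ffunE inE; case: (u \in S) => //=.
Qed.

Lemma SO_g (A : assign l) : stationary_optimum f A -> A = restrict g (coverage A).
Proof.
move=> [_ HA]; apply/eqP; apply: contraT => nA.
have := HA (restrict g (coverage A)) (restrict g (~: coverage A)).
rewrite eq_sym nA cov_restrict cov_restrict combine_restrict => /(_ isT erefl erefl).
have : combine A (restrict g (~: coverage A)) != g.
  move: nA; apply: contra => /eqP E; apply/eqP/ffunP => u.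
  have := congr1 (fun h : chrom l => h u) E; rewrite !ffunE !inE.
  by case: (A u) => [b|] //= ->.
move=> /(gmax _) H1 H2; by have := lt_trans H1 H2; rewrite ltxx.
Qed.


Lemma PsiAt_exists (B : assign l) w :
  PsiAt f B w != [set g w] -> exists2 y, y \in Psi f B & y w != g w.
Proof.
move=> H; case: (boolP [exists y, (y \in Psi f B) && (y w != g w)]).
  by move=> /existsP[y /andP[]]; exists y.
move=> Hn; case/eqP: H; apply/setP => b; rewrite inE.
apply/imsetP/eqP.
- move=> [y Py ->]; apply/eqP; apply: contraT => ny; case/negP: Hn.
  by apply/existsP; exists y; rewrite Py.
- move=> ->; have [y Py] := Psi_nonempty B; exists y => //.
  apply/eqP; apply: contraT => ny; case/negP: Hn.
  by apply/existsP; exists y; rewrite Py eq_sym.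
Qed.

Lemma SO_closed (A : assign l) u w : stationary_optimum f A ->
  w \in coverage A -> epistatic f [set u] w -> u \in coverage A.
Proof.
move=> SA wA /and3P[_ _ /forallP /(_ u)]; rewrite inE eqxx /=.
move=> /existsP[B /andP[/eqP cB dB]].
case: (boolP (u \in coverage A)) => // nu; exfalso.
have e0 : coverage (remove B u) = set0 by rewrite cov_remove cB setDv.
rewrite (PsiAt_empty _ w e0) in dB.
have [y Py nyw] := PsiAt_exists _ _ dB.
have EA := SO_g _ SA.
case: SA => _ HA.
have := HA (restrict y (coverage A)) (restrict y (~: coverage A)).
rewrite cov_restrict cov_restrict combine_restrict.
have neq : restrict y (coverage A) != A.
  have Aw : A w = Some (g w) by rewrite {1}EA ffunE wA.
  apply: contra nyw => /eqP E.
  have := congr1 (fun h : assign l => h w) E; rewrite ffunE wA Aw.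
  by case=> ->.
move=> /(_ neq erefl erefl) Hlt.
have : f (combine A (restrict y (~: coverage A))) <= f y.
  move: Py; rewrite inE => /andP[agy /forallP /(_ (combine A (restrict y (~: coverage A))))].
  move=> /implyP; apply; apply/forallP => x; rewrite ffunE.
  case: (eqVneq x u) => [->|nxu].
  - have -> : A u = None by apply/eqP; move: nu; rewrite inE negbK.
    by rewrite ffunE inE nu /=; move/forallP: agy => /(_ u) /orP[->|->]; rewrite ?orbT.
  - have -> : B x = None.
      apply/eqP; apply: contraT => bx.
      have : x \in coverage B by rewrite inE.
      by rewrite cB inE (negbTE nxu).
    by [].
by rewrite leNgt Hlt.
Qed.

Lemma IN_sub (A : assign l) v : stationary_optimum f A -> v \in coverage A ->
  forall i, IN f v i \subset coverage A.
Proof.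
move=> SA vA; elim=> [|i IH] /=; first by rewrite sub1set.
apply/subsetP => u; rewrite inE => /existsP[w /andP[wi e]].
exact: SO_closed _ _ _ SA (subsetP IH w wi) e.
Qed.

Lemma INstar_sub (A : assign l) v : stationary_optimum f A -> v \in coverage A ->
  INstar f v \subset coverage A.
Proof.
move=> SA vA; apply/subsetP => u /bigcupP[i _ ui]; exact: subsetP (IN_sub _ _ SA vA i) u ui.
Qed.

Lemma stat_ind (C : {set 'I_l}) :
  (forall u w, w \in C -> epistatic f [set u] w -> u \in C) ->
  no_weak_epistasis f ->
  forall n (A : assign l), (#|coverage A| <= n)%N -> coverage A \subset ~: C ->
  forall w, w \in C -> PsiAt f A w = [set g w].
Proof.
move=> clC nw; elim=> [|n IH] A.
  by rewrite leqn0 cards_eq0 => /eqP e0 _ w _; exact: PsiAt_empty.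
move=> sz sub w wC.
case: (eqVneq (coverage A) set0) => [e0|ne]; first exact: PsiAt_empty.
have IHs : forall B : assign l, coverage B \proper coverage A -> PsiAt f B w = [set g w].
  move=> B pB; apply: IH => //.
    by rewrite -ltnS; apply: leq_trans (proper_card pB) sz.
  exact: subset_trans (proper_sub pB) sub.
apply/eqP; apply: contraT => dA.
have wnA : w \notin coverage A.
  apply/negP => wA; have := subsetP sub w wA; by rewrite inE wC.
have epiS : epistatic f (coverage A) w.
  rewrite /epistatic ne wnA /=; apply/forallP => s; apply/implyP => sA.
  apply/existsP; exists A; rewrite eqxx /= (IHs (remove A s)) //.
  by rewrite cov_remove; exact: properD1.
case: (ltnP #|coverage A| 2) => [lt2|ge2].
  have : #|coverage A| == 1%N.
    by rewrite eqn_leq -ltnS lt2 /= card_gt0.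
  move=> /cards1P[u eu].
  have uC : u \in C by apply: clC wC _; rewrite -eu.
  have : u \in coverage A by rewrite eu inE.
  by move=> /(subsetP sub); rewrite inE uC.
have := nw (coverage A) w; rewrite /weak_epistasis epiS ge2 /=.
move=> /forallPn[T]; rewrite negb_imply negbK => /andP[/andP[Tn0 TS] epiT].
move: epiT => /and3P[_ _ /forallP Hall].
have [t tT] := set0Pn _ Tn0.
have := Hall t; rewrite tT /= => /existsP[B /andP[/eqP cB dB]].
rewrite !IHs ?eqxx // in dB.
  by rewrite cov_remove cB; apply: sub_proper_trans (subD1set _ _) TS.
by rewrite cB.
Qed.

Definition Fv v (X : {set 'I_l}) : {set 'I_l} :=
  [set v] :|: [set u | [exists w in X, epistatic f [set u] w]].

Lemma Fv_mono v : {homo Fv v : X Y / X \subset Y}.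
Proof.
move=> X Y XY; apply/subsetP => u; rewrite !inE => /orP[->//|/existsP[w /andP[wX e]]].
apply/orP; right; apply/existsP; exists w; by rewrite (subsetP XY w wX).
Qed.

Lemma mem_iterF v k u :
  u \in iter k (Fv v) set0 <-> exists2 i, (i < k)%N & u \in IN f v i.
Proof.
elim: k u => [|k IH] u /=.
  by rewrite inE; split=> // [[]].
rewrite !inE; split.
- move=> /orP[/eqP->|/existsP[w /andP[wX e]]].
    by exists 0%N => //; rewrite inE.
  have [i ik wi] := (IH w).1 wX.
  exists i.+1 => //=; rewrite inE; apply/existsP; exists w; by rewrite wi.
- move=> [[|i] ik] /=; first by rewrite inE => ->.
  rewrite inE => /existsP[w /andP[wi e]].
  apply/orP; right; apply/existsP; exists w; rewrite e andbT.
  by apply/(IH w).2; exists i.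
Qed.

Lemma INstar_fix v : INstar f v = fixset (Fv v).
Proof.
apply/setP => u; rewrite /fixset card_ord; apply/bigcupP/idP.
- move=> [i _ ui]; apply/(mem_iterF v l u).2; by exists i.
- move=> /(mem_iterF v l u).1[i il ui]; by exists (Ordinal il).
Qed.

Lemma INstar_closed v u w : w \in INstar f v -> epistatic f [set u] w ->
  u \in INstar f v.
Proof.
rewrite INstar_fix => wI e; rewrite -fixsetK; last exact: Fv_mono.
rewrite !inE; apply/orP; right; apply/existsP; exists w; by rewrite wI.
Qed.

Lemma restrict_SO v : (0 < l)%N -> no_weak_epistasis f ->
  stationary_optimum f (restrict g (INstar f v)).
Proof.
move=> l0 nw; set C := INstar f v.
have vC : v \in C by apply/bigcupP; exists (Ordinal l0) => //; rewrite inE.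
split; first by rewrite cov_restrict; apply/set0Pn; exists v.
move=> A' Rr nA; rewrite cov_restrict => cA cR.
have HP : forall w, w \in C -> PsiAt f Rr w = [set g w].
  move=> w wC; apply: (stat_ind C (INstar_closed v) nw _ Rr (leqnn _)) => //.
  by rewrite cR.
have [y Py] := Psi_nonempty Rr.
have agy : agrees Rr y by move: Py; rewrite inE => /andP[].
have Ey : combine (restrict g C) Rr = y.
  apply/ffunP => u; rewrite !ffunE; case: ifP => uC.
    have : y u \in PsiAt f Rr u by apply/imsetP; exists y.
    by rewrite HP // inE => /eqP.
  have : u \in coverage Rr by rewrite cR inE uC.
  rewrite inE; move/forallP: agy => /(_ u) /orP[/eqP->//|/eqP-> _] /=.
  done.
have agz : agrees Rr (combine A' Rr).
  apply/forallP => u; rewrite ffunE.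
  case Ru: (Rr u) => [b|] //=.
  have : u \in coverage Rr by rewrite inE Ru.
  by rewrite cR inE -cA inE negbK => /eqP -> /=.
rewrite Ey.
have Hle : f (combine A' Rr) <= f y.
  by move: Py; rewrite inE => /andP[_ /forallP /(_ (combine A' Rr))]; rewrite agz.
rewrite lt_def Hle andbT; apply/eqP => E.
have zP : combine A' Rr \in Psi f Rr.
  rewrite inE agz /=; apply/forallP => z; apply/implyP => az.
  rewrite -E; move: Py; rewrite inE => /andP[_ /forallP /(_ z)]; by rewrite az.
have [w wC nw'] : exists2 w, w \in C & A' w != Some (g w).
  case: (boolP [exists w, (w \in C) && (A' w != Some (g w))]).
    by move=> /existsP[w /andP[]]; exists w.
  move=> /existsPn Hn; case/eqP: nA; apply/ffunP => u; rewrite ffunE.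
  have := Hn u; rewrite negb_and negbK; case: ifP => uC /=.
    by move/eqP.
  move=> _; apply/eqP; move: uC; rewrite -cA inE => /negbT; by rewrite negbK.
have : combine A' Rr w \in PsiAt f Rr w by apply/imsetP; exists (combine A' Rr).
rewrite HP // inE ffunE.
have : w \in coverage A' by rewrite cA.
rewrite inE; case: (A' w) nw' => [b|] // nb _ /eqP eb.
by move: nb; rewrite eb eqxx.
Qed.

End H.

Theorem theorem1 (l : nat) (R : realFieldType) (f : chrom l -> R) (g : chrom l) :
  (0 < l)%N ->
  (forall y : chrom l, y != g -> f y < f g) ->
  no_weak_epistasis f ->
  forall v : 'I_l,
    (forall A : assign l, is_min_SO f v A -> coverage A = INstar f v) /\
    (forall A : assign l, is_min_SO f v A <-> A = restrict g (INstar f v)).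
Proof.
move=> l0 gm nw v.
have vC : v \in INstar f v by apply/bigcupP; exists (Ordinal l0) => //; rewrite inE.
have SR := restrict_SO _ _ _ _ gm v l0 nw.
have M : is_min_SO f v (restrict g (INstar f v)).
  split=> //; first by rewrite cov_restrict.
  move=> B SB vB; rewrite cov_restrict; apply: subset_leq_card.
  exact: INstar_sub _ _ _ _ gm B v SB vB.
have CM : forall A : assign l, is_min_SO f v A -> coverage A = INstar f v.
  move=> A [SA vA Hmin]; apply/eqP; rewrite eq_sym eqEcard.
  rewrite (INstar_sub _ _ _ _ gm A v SA vA) /=.
  by have := Hmin _ SR; rewrite cov_restrict; apply.
split=> // A; split.
  move=> MA; rewrite {1}(SO_g _ _ _ _ gm A) ?(CM A MA) //; by case: MA.
by move=> ->.
Qed.
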